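(* Let $\mathsf{Ax}\subseteq\mathbf{L}$ and let $\mathcal{F}$ be a class of $\mathsf{CK}$-frames such that the canonical frame $\mathcal{X}_{\mathsf{CK}\oplus\mathsf{Ax}}$ belongs to $\mathcal{F}$ and every frame in $\mathcal{F}$ validates every formula of $\mathsf{Ax}$ (all its substitution instances). Then for all $\Gamma\subseteq\mathbf{L}$ and $\varphi\in\mathbf{L}$, $\Gamma\Vdash_{\mathcal{F}}\varphi$ implies $\Gamma\vdash_{\mathsf{Ax}}\varphi$.
   Context: Formulas: $\mathbf{L}$ is generated from a countably infinite set of propositional variables by $\varphi ::= p \mid \bot \mid \varphi\wedge\varphi \mid \varphi\vee\varphi \mid \varphi\to\varphi \mid \Box\varphi \mid \Diamond\varphi$. Axioms: $\mathsf{K}_\Box$: $\Box(\varphi\to\psi)\to(\Box\varphi\to\Box\psi)$; $\mathsf{K}_\Diamond$: $\Box(\varphi\to\psi)\to(\Diamond\varphi\to\Diamond\psi)$. For a set $\mathsf{Ax}\subseteq\mathbf{L}$, the logic $\mathsf{CK}\oplus\mathsf{Ax}$ is the relation $\Gamma\vdash_{\mathsf{Ax}}\varphi$ inductively generated by: (Ax) $\Gamma\vdash\varphi$ whenever $\varphi$ is a substitution instance of an axiom of a standard Hilbert axiomatisation of intuitionistic propositional logic, of $\mathsf{K}_\Box$, of $\mathsf{K}_\Diamond$, or of an element of $\mathsf{Ax}$; (El) $\Gamma\vdash\varphi$ if $\varphi\in\Gamma$; (MP) from $\Gamma\vdash\varphi$ and $\Gamma\vdash\varphi\to\psi$ infer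 $\Gamma\vdash\psi$; (Nec) from $\emptyset\vdash\varphi$ infer $\Gamma\vdash\Box\varphi$. A theory is a set closed under $\vdash_{\mathsf{Ax}}$; it is prime if $\varphi\vee\psi\in\Gamma$ implies $\varphi\in\Gamma$ or $\psi\in\Gamma$ (prime theories may contain $\bot$; $\mathbf{L}$ itself is one). A $\mathsf{CK}$-frame is a tuple $(X,e,\le,R)$ where $(X,\le)$ is a preorder, $e\in X$ is a maximal element of $(X,\le)$, and $R$ is a binary relation on $X$ with $eRx$ iff $x=e$. A valuation assigns to each variable $p$ an upset $V(p)$ with $e\in V(p)$. Forcing: $x\Vdash p$ iff $x\in V(p)$; $x\Vdash\bot$ iff $x=e$; $\wedge,\vee$ pointwise; $x\Vdash\varphi\to\psi$ iff for all $y\ge x$, $y\Vdash\varphi$ implies $y\Vdash\psi$; $x\Vdash\Box\varphi$ iff for all $y,z$ with $x\le y$ and $yRz$, $z\Vdash\varphi$; $x\Vdash\Diamond\varphi$ iff for all $y\ge x$ there is $z$ with $yRz$ and $z\Vdash\varphi$. A frame validates a formula if it is forced at every world under every valuation. For a class $\mathcal{F}$ of frames, $\Gamma\Vdash_{\mathcal{F}}\varphi$ means: for every frame in $\mathcal{F}$, every valuation and every world $x$, if $x$ forces all of $\Gamma$ then $x\Vdash\varphi$. Canonical frame: a segment (relative to $\mathsf{CK}\oplus\mathsf{Ax}$) is a pair $(\Gamma,U)$ with $\Gamma$ a prime theory and $U$ a set of prime theories such that (1) if $\Box\varphi\in\Gamma$ then $\varphi\in\Delta$ for all $\Delta\in U$,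 and (2) if $\Diamond\varphi\in\Gamma$ then $\varphi\in\Delta$ for some $\Delta\in U$. $\mathcal{X}_{\mathsf{CK}\oplus\mathsf{Ax}}=(SEG,(\mathbf{L},\{\mathbf{L}\}),\precsim,R)$ where $SEG$ is the set of all segments, $(\Gamma,U)\precsim(\Gamma',U')$ iff $\Gamma\subseteq\Gamma'$, and $(\Gamma,U)R(\Gamma',U')$ iff $\Gamma'\in U$. *)

(* Defs.v *)
From Stdlib Require Import Classical FunctionalExtensionality PropExtensionality ProofIrrelevance.

Inductive form : Type :=
| Var : nat -> form
| Bot : form
| And : form -> form -> form
| Or : form -> form -> form
| Imp : form -> form -> form
| Box : form -> form
| Dia : form -> form.

Fixpoint subst (s : nat -> form) (f : form) : form :=
  match f with
  | Var p => s p
  | Bot => Bot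
  | And a b => And (subst s a) (subst s b)
  | Or a b => Or (subst s a) (subst s b)
  | Imp a b => Imp (subst s a) (subst s b)
  | Box a => Box (subst s a)
  | Dia a => Dia (subst s a)
  end.

Inductive IPC_axiom : form -> Prop :=
| IA1 a b : IPC_axiom (Imp a (Imp b a))
| IA2 a b c : IPC_axiom (Imp (Imp a (Imp b c)) (Imp (Imp a b) (Imp a c)))
| IA3 a b : IPC_axiom (Imp (And a b) a)
| IA4 a b : IPC_axiom (Imp (And a b) b)
| IA5 a b : IPC_axiom (Imp a (Imp b (And a b)))
| IA6 a b : IPC_axiom (Imp a (Or a b))
| IA7 a b : IPC_axiom (Imp b (Or a b))
| IA8 a b c : IPC_axiom (Imp (Imp a c) (Imp (Imp b c) (Imp (Or a b) c)))
| IA9 a : IPC_axiom (Imp Bot a).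

Inductive CK_axiom (Ax : form -> Prop) : form -> Prop :=
| AxIPC f : IPC_axiom f -> CK_axiom Ax f
| AxKBox a b : CK_axiom Ax (Imp (Box (Imp a b)) (Imp (Box a) (Box b)))
| AxKDia a b : CK_axiom Ax (Imp (Box (Imp a b)) (Imp (Dia a) (Dia b)))
| AxExtra f s : Ax f -> CK_axiom Ax (subst s f).

Inductive deriv (Ax : form -> Prop) : (form -> Prop) -> form -> Prop :=
| DAx G f : CK_axiom Ax f -> deriv Ax G f
| DEl G f : G f -> deriv Ax G f
| DMP G f g : deriv Ax G f -> deriv Ax G (Imp f g) -> deriv Ax G g
| DNec G f : deriv Ax (fun _ => False) f -> deriv Ax G (Box f).

Definition theory (Ax : form -> Prop) (G : form -> Prop) : Prop :=
  forall f, deriv Ax G f -> G f.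

Definition prime_theory (Ax : form -> Prop) (G : form -> Prop) : Prop :=
  theory Ax G /\ (forall a b, G (Or a b) -> G a \/ G b).

Record CKframe : Type := {
  world :> Type;
  fe : world;
  fle : world -> world -> Prop;
  fR : world -> world -> Prop;
  fle_refl : forall x, fle x x;
  fle_trans : forall x y z, fle x y -> fle y z -> fle x z;
  fe_max : forall x, fle fe x -> fle x fe;
  fR_e : forall x, fR fe x <-> x = fe
}.

Definition valuation (X : CKframe) (V : nat -> X -> Prop) : Prop :=
  forall p, V p (fe X) /\ (forall x y, fle X x y -> V p x -> V p y).

Fixpoint forces (X : CKframe) (V : nat -> X -> Prop) (x : X) (f : form) : Prop :=
  match f with
  | Var p => V p x
  | Bot => x = fe X
  | And a b => forces X V x a /\ forces X V x b
  | Or a b => forces X V x a \/ forces X V x b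
  | Imp a b => forall y, fle X x y -> forces X V y a -> forces X V y b
  | Box a => forall y z, fle X x y -> fR X y z -> forces X V z a
  | Dia a => forall y, fle X x y -> exists z, fR X y z /\ forces X V z a
  end.

Definition validates (X : CKframe) (f : form) : Prop :=
  forall V, valuation X V -> forall x : X, forces X V x f.

Definition sem_conseq (F : CKframe -> Prop) (G : form -> Prop) (f : form) : Prop :=
  forall X : CKframe, F X -> forall V, valuation X V ->
    forall x : X, (forall g, G g -> forces X V x g) -> forces X V x f.

Definition fullL : form -> Prop := fun _ => True.

Definition is_segment (Ax : form -> Prop)
    (p : (form -> Prop) * ((form -> Prop) -> Prop)) : Prop :=
  prime_theory Ax (fst p) /\
  (forall D, snd p D -> prime_theory Ax D) /\
  (forall a, fst p (Box a) -> forall D, snd p D -> D a) /\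
  (forall a, fst p (Dia a) -> exists D, snd p D /\ D a).

Definition segment (Ax : form -> Prop) : Type :=
  { p : (form -> Prop) * ((form -> Prop) -> Prop) | is_segment Ax p }.

Lemma fullL_prime Ax : prime_theory Ax fullL.
Proof. split; [intros f _; exact I | intros a b _; left; exact I]. Qed.

Lemma e_segment Ax : is_segment Ax (fullL, fun D => D = fullL).
Proof.
  split; [|split; [|split]]; simpl.
  - apply fullL_prime.
  - intros D HD; rewrite HD; apply fullL_prime.
  - intros a _ D HD; rewrite HD; exact I.
  - intros a _; exists fullL; split; [reflexivity | exact I].
Qed.

Definition seg_e Ax : segment Ax := exist _ _ (e_segment Ax).

Definition seg_le Ax (s t : segment Ax) : Prop :=
  forall f, fst (proj1_sig s) f -> fst (proj1_sig t) f.

Definition seg_R Ax (s t : segment Ax) : Prop :=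
  snd (proj1_sig s) (fst (proj1_sig t)).

Lemma seg_le_refl Ax s : seg_le Ax s s.
Proof. intros f H; exact H. Qed.

Lemma seg_le_trans Ax s t u : seg_le Ax s t -> seg_le Ax t u -> seg_le Ax s u.
Proof. intros H1 H2 f H; apply H2, H1, H. Qed.

Lemma seg_e_max Ax s : seg_le Ax (seg_e Ax) s -> seg_le Ax s (seg_e Ax).
Proof. intros _ f _; exact I. Qed.

Lemma seg_R_e Ax s : seg_R Ax (seg_e Ax) s <-> s = seg_e Ax.
Proof.
  split.
  - destruct s as [[G U] [HG [HU [HB HD]]]]; unfold seg_R; simpl; intros HGe.
    subst G.
    assert (HUe : U = fun D => D = fullL).
    { apply functional_extensionality; intros D; apply propositional_extensionality.
      split.
      - intros HD'; apply functional_extensionality; intros f;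
          apply propositional_extensionality; split; [intros _; exact I|].
        intros _; exact (HB f I D HD').
      - intros ->. destruct (HD Bot I) as [D [HD' _]].
        replace fullL with D; [exact HD'|].
        apply functional_extensionality; intros f;
          apply propositional_extensionality; split; [intros _; exact I|].
        intros _; exact (HB f I D HD'). }
    subst U. unfold seg_e. f_equal. apply proof_irrelevance.
  - intros ->; reflexivity.
Qed.

Definition canonical_frame (Ax : form -> Prop) : CKframe := {|
  world := segment Ax;
  fe := seg_e Ax;
  fle := seg_le Ax;
  fR := seg_R Ax;
  fle_refl := seg_le_refl Ax;
  fle_trans := seg_le_trans Ax;
  fe_max := seg_e_max Ax;
  fR_e := seg_R_e Ax
|}.

(* Main.v *)
Require Import Defs.
From Stdlib Require Import Classical FunctionalExtensionality PropExtensionality ProofIrrelevance List Arith Lia.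
From Stdlib Require Cantor.

Section Proofs.
Variable Ax : form -> Prop.

Lemma d_id G a : deriv Ax G (Imp a a).
Proof.
  eapply DMP; [apply DAx, AxIPC, (IA1 a a)|].
  eapply DMP; [apply DAx, AxIPC, (IA1 a (Imp a a))|].
  apply DAx, AxIPC, (IA2 a (Imp a a) a).
Qed.

Lemma d_ax G f : IPC_axiom f -> deriv Ax G f.
Proof. intros; apply DAx, AxIPC; auto. Qed.

Lemma ded : forall H f, deriv Ax H f -> forall G a,
  (forall x, H x -> G x \/ x = a) -> deriv Ax G (Imp a f).
Proof.
  induction 1; intros G' a Hs.
  - eapply DMP; [apply DAx; eauto| apply d_ax, IA1].
  - destruct (Hs f H) as [Hf| ->].
    + eapply DMP; [apply DEl; eauto| apply d_ax, IA1].
    + apply d_id.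
  - specialize (IHderiv1 G' a Hs); specialize (IHderiv2 G' a Hs).
    eapply DMP; [exact IHderiv1|].
    eapply DMP; [exact IHderiv2| apply d_ax, IA2].
  - eapply DMP; [apply DNec; eauto| apply d_ax, IA1].
Qed.

Lemma mono : forall H f, deriv Ax H f -> forall G, (forall x, H x -> G x) -> deriv Ax G f.
Proof.
  induction 1; intros G' Hs.
  - apply DAx; auto.
  - apply DEl; auto.
  - eapply DMP; eauto.
  - apply DNec; auto.
Qed.

Lemma compact : forall H f, deriv Ax H f ->
  exists l, (forall x, In x l -> H x) /\ deriv Ax (fun x => In x l) f.
Proof.
  induction 1.
  - exists nil; split; [simpl; tauto| apply DAx; auto].
  - exists (f :: nil); split; [simpl; intros x [->|[]]; auto| apply DEl; simpl; auto].
  - destruct IHderiv1 as [l1 [H1 D1]], IHderiv2 as [l2 [H2 D2]].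
    exists (l1 ++ l2); split.
    + intros x Hx; apply in_app_or in Hx; destruct Hx; auto.
    + eapply DMP; [eapply mono; [exact D1|] | eapply mono; [exact D2|]];
      intros; apply in_or_app; auto.
  - exists nil; split; [simpl; tauto| apply DNec; auto].
Qed.

Lemma theory_deriv G f : prime_theory Ax G -> deriv Ax G f -> G f.
Proof. intros [T _] D; apply T, D. Qed.

Lemma theory_MP G a b : prime_theory Ax G -> G (Imp a b) -> G a -> G b.
Proof.
  intros P H1 H2; apply (theory_deriv _ _ P); eapply DMP; apply DEl; eauto.
Qed.

Lemma theory_ax G f : prime_theory Ax G -> IPC_axiom f -> G f.
Proof. intros P H; apply (theory_deriv _ _ P), d_ax, H. Qed.

Fixpoint enc (f : form) : nat :=
  match f with
  | Var n => Cantor.to_nat (0, n)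
  | Bot => Cantor.to_nat (1, 0)
  | And a b => Cantor.to_nat (2, Cantor.to_nat (enc a, enc b))
  | Or a b => Cantor.to_nat (3, Cantor.to_nat (enc a, enc b))
  | Imp a b => Cantor.to_nat (4, Cantor.to_nat (enc a, enc b))
  | Box a => Cantor.to_nat (5, enc a)
  | Dia a => Cantor.to_nat (6, enc a)
  end.

Lemma to_nat_inj p q : Cantor.to_nat p = Cantor.to_nat q -> p = q.
Proof.
  intros H. rewrite <- (Cantor.cancel_of_to p), <- (Cantor.cancel_of_to q), H; auto.
Qed.

Lemma pair_inj a b c d : Cantor.to_nat (a, b) = Cantor.to_nat (c, d) -> a = c /\ b = d.
Proof. intros H; apply to_nat_inj in H; inversion H; auto. Qed.

Lemma enc_inj : forall f g, enc f = enc g -> f = g.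
Proof.
  induction f; destruct g; intros H; cbn [enc] in H; apply pair_inj in H;
    destruct H as [H1 H2]; try discriminate; subst; auto.
  all: try (apply pair_inj in H2; destruct H2 as [H2 H3]).
  all: f_equal; auto.
Qed.

Section Lind.
Variable G : form -> Prop.
Variable f0 : form.

Fixpoint ch (n : nat) : form -> Prop :=
  match n with
  | 0 => G
  | S n => fun x => ch n x \/ (enc x = n /\ ~ deriv Ax (fun y => ch n y \/ y = x) f0)
  end.

Lemma ch_mono n m : n <= m -> forall x, ch n x -> ch m x.
Proof.
  induction 1; auto. intros x Hx; simpl; left; auto.
Qed.

Lemma ch_ok : ~ deriv Ax G f0 -> forall n, ~ deriv Ax (ch n) f0.
Proof.
  intros H0; induction n; simpl; auto.
  destruct (classic (exists x, enc x = n /\ ~ deriv Ax (fun y => ch n y \/ y = x) f0))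
    as [[x [E Hx]]|Hn].
  - intros D; apply Hx; eapply mono; [exact D|].
    intros y [Hy|[Ey _]]; auto. right; apply enc_inj; congruence.
  - intros D; apply IHn; eapply mono; [exact D|].
    intros y [Hy|[Ey Hy]]; auto. exfalso; apply Hn; eauto.
Qed.

Definition lim x := exists n, ch n x.

Lemma list_stage l : (forall x, In x l -> lim x) -> exists N, forall x, In x l -> ch N x.
Proof.
  induction l; intros Hl.
  - exists 0; simpl; tauto.
  - destruct IHl as [N HN]; [intros; apply Hl; simpl; auto|].
    destruct (Hl a (or_introl eq_refl)) as [m Hm].
    exists (max N m); intros x [->|Hx].
    + eapply ch_mono; [|exact Hm]; lia.
    + eapply ch_mono; [|apply HN; exact Hx]; lia.
Qed.

Lemma lim_ok : ~ deriv Ax G f0 -> ~ deriv Ax lim f0.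
Proof.
  intros H0 D. destruct (compact _ _ D) as [l [Hl Dl]].
  destruct (list_stage l Hl) as [N HN].
  apply (ch_ok H0 N); eapply mono; eauto.
Qed.

Lemma lim_imp x : ~ lim x -> deriv Ax lim (Imp x f0).
Proof.
  intros Hx. destruct (classic (deriv Ax (fun y => ch (enc x) y \/ y = x) f0)) as [D|D].
  - eapply ded; [exact D|]. intros y [Hy|Hy]; auto. left; exists (enc x); auto.
  - exfalso; apply Hx; exists (S (enc x)); simpl; right; auto.
Qed.

Lemma lindenbaum : ~ deriv Ax G f0 ->
  exists D, prime_theory Ax D /\ (forall x, G x -> D x) /\ ~ D f0.
Proof.
  intros H0. pose proof (lim_ok H0) as HL. exists lim; split; [split|split].
  - intros x Dx. apply NNPP; intros Hx. apply HL.
    eapply DMP; [exact Dx| apply lim_imp; auto].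
  - intros a b Hab. apply NNPP; intros Hn. apply HL.
    eapply DMP; [apply DEl; exact Hab|].
    eapply DMP; [apply (lim_imp b); intro; apply Hn; auto|].
    eapply DMP; [apply (lim_imp a); intro; apply Hn; auto|].
    apply d_ax, IA8.
  - intros x Hx; exists 0; auto.
  - intros Hf; apply HL, DEl, Hf.
Qed.
End Lind.

Definition boxset (Gm : form -> Prop) x := Gm (Box x).

Fixpoint imps (l : list form) (a : form) : form :=
  match l with nil => a | x :: l => imps l (Imp x a) end.

Lemma list_ded : forall l a, deriv Ax (fun x => In x l) a -> deriv Ax (fun _ => False) (imps l a).
Proof.
  induction l; simpl; intros b D.
  - eapply mono; [exact D| simpl; tauto].
  - apply IHl. eapply ded; [exact D|]. intros x [->|Hx]; auto.
Qed.

Lemma box_list Gm : prime_theory Ax Gm -> forall l a, (forall x, In x l -> Gm (Box x)) ->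
  deriv Ax (fun _ => False) (imps l a) -> Gm (Box a).
Proof.
  intros P; induction l; simpl; intros b Hl D.
  - apply (theory_deriv _ _ P), DNec, D.
  - assert (H1 : Gm (Box (Imp a b))) by (apply IHl; auto).
    eapply theory_MP; [exact P| |apply Hl; auto].
    eapply theory_MP; [exact P| |exact H1].
    apply (theory_deriv _ _ P), DAx, AxKBox.
Qed.

Lemma box_lemma Gm a : prime_theory Ax Gm -> deriv Ax (boxset Gm) a -> Gm (Box a).
Proof.
  intros P D. destruct (compact _ _ D) as [l [Hl Dl]].
  eapply box_list; eauto. apply list_ded; auto.
Qed.

Lemma mkseg_ok D : prime_theory Ax D -> is_segment Ax (D, fun E => E = fullL).
Proof.
  intros P; split; [|split; [|split]]; simpl; auto.
  - intros E ->; apply fullL_prime.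
  - intros a _ E ->; exact I.
  - intros a _; exists fullL; split; [reflexivity | exact I].
Qed.

Definition mkseg D (P : prime_theory Ax D) : segment Ax := exist _ _ (mkseg_ok D P).

Definition Gam (s : segment Ax) := fst (proj1_sig s).

Lemma seg_prime (s : segment Ax) : prime_theory Ax (Gam s).
Proof. exact (proj1 (proj2_sig s)). Qed.

Definition CV (p : nat) (s : segment Ax) : Prop := Gam s (Var p).

Lemma CV_val : valuation (canonical_frame Ax) CV.
Proof.
  intros p; split.
  - exact I.
  - intros x y Hle H; apply Hle, H.
Qed.

Lemma truth : forall a (s : segment Ax),
  forces (canonical_frame Ax) CV s a <-> Gam s a.
Proof.
  induction a; intros s; simpl.
  - tauto.
  - split.
    + intros ->; exact I.
    + intros HB. apply (proj1 (seg_R_e Ax s)). unfold seg_R; simpl.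
      apply functional_extensionality; intros f; apply propositional_extensionality.
      split; [intros; exact I|]. intros _.
      apply (theory_MP _ Bot); [apply seg_prime| |exact HB]. apply theory_ax;
        [apply seg_prime| apply IA9].
  - rewrite IHa1, IHa2. pose proof (seg_prime s) as P. split.
    + intros [H1 H2]. eapply theory_MP; [exact P| |exact H2].
      eapply theory_MP; [exact P| |exact H1]. apply theory_ax; [auto| apply IA5].
    + intros H; split; (eapply theory_MP; [exact P| |exact H]);
        apply theory_ax; auto; constructor.
  - rewrite IHa1, IHa2. pose proof (seg_prime s) as P. split.
    + intros [H|H]; (eapply theory_MP; [exact P| |exact H]);
        apply theory_ax; auto; constructor.
    + apply P.
  - pose proof (seg_prime s) as P. split.
    + intros H. apply NNPP; intros Hn.
      assert (ND : ~ deriv Ax (fun y => Gam s y \/ y = a1) a2).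
      { intros D. apply Hn, (theory_deriv _ _ P). eapply ded; [exact D|]. auto. }
      destruct (lindenbaum _ _ ND) as [D [PD [Sub ND2]]].
      set (t := mkseg D PD).
      apply ND2. apply (IHa2 t). apply H.
      * intros x Hx; apply Sub; auto.
      * apply (IHa1 t). apply Sub; auto.
    + intros H y Hle Hy. apply IHa2. apply IHa1 in Hy.
      eapply theory_MP; [apply seg_prime| apply Hle, H| exact Hy].
  - pose proof (seg_prime s) as P. split.
    + intros H. apply NNPP; intros Hn.
      assert (ND : ~ deriv Ax (boxset (Gam s)) a).
      { intros D; apply Hn, box_lemma; auto. }
      destruct (lindenbaum _ _ ND) as [S [PS [Sub NS]]].
      assert (Ht : is_segment Ax (Gam s, fun E => E = fullL \/ E = S)).
      { split; [|split; [|split]]; simpl; auto.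
        - intros E [->| ->]; auto. apply fullL_prime.
        - intros b Hb E [->| ->]; [exact I| apply Sub, Hb].
        - intros b _; exists fullL; split; [left; reflexivity| exact I]. }
      set (t := exist _ _ Ht : segment Ax).
      apply NS. apply (IHa (mkseg S PS)).
      apply (H t (mkseg S PS)).
      * intros x Hx; exact Hx.
      * unfold seg_R; simpl; right; reflexivity.
    + intros H y z Hle HR. apply IHa.
      destruct y as [[Gy Uy] [Py [PU [HB HD]]]].
      apply (HB a (Hle _ H) _ HR).
  - pose proof (seg_prime s) as P. split.
    + intros H. apply NNPP; intros Hn.
      set (U := fun E => prime_theory Ax E /\ (forall x, Gam s (Box x) -> E x) /\ ~ E a).
      assert (Ht : is_segment Ax (Gam s, U)).
      { split; [|split; [|split]]; simpl; auto.
        - intros E [PE _]; auto.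
        - intros b Hb E [_ [HE _]]; auto.
        - intros b Hb.
          assert (ND : ~ deriv Ax (fun y => boxset (Gam s) y \/ y = b) a).
          { intros D. apply Hn.
            assert (HBx : Gam s (Box (Imp b a))).
            { apply box_lemma; auto. eapply ded; [exact D|]. auto. }
            eapply theory_MP; [exact P| |exact Hb].
            eapply theory_MP; [exact P| |exact HBx].
            apply (theory_deriv _ _ P), DAx, AxKDia. }
          destruct (lindenbaum _ _ ND) as [E [PE [Sub NE]]].
          exists E; split; [unfold U; split; [exact PE|split; [|exact NE]]|].
          + intros x Hx; apply Sub; left; exact Hx.
          + apply Sub; right; reflexivity. }
      set (t := exist _ _ Ht : segment Ax).
      destruct (H t) as [z [Hz Fz]]; [intros x Hx; exact Hx|].
      apply IHa in Fz. unfold seg_R in Hz; simpl in Hz.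
      destruct Hz as [_ [_ Hz]]; apply Hz, Fz.
    + intros H y Hle.
      destruct y as [[Gy Uy] [Py [PU [HB HD]]]] eqn:Ey.
      destruct (HD a (Hle _ H)) as [D [HDU HDa]].
      exists (mkseg D (PU D HDU)); split.
      * unfold seg_R; simpl; exact HDU.
      * apply IHa; exact HDa.
Qed.

End Proofs.

Theorem mainTheorem4 (Ax : form -> Prop) (F : CKframe -> Prop) :
  F (canonical_frame Ax) ->
  (forall X : CKframe, F X -> forall (a : form) (s : nat -> form),
      Ax a -> validates X (subst s a)) ->
  forall (G : form -> Prop) (f : form), sem_conseq F G f -> deriv Ax G f.
Proof.
  intros HC _ G f HS. apply NNPP; intros ND.
  destruct (lindenbaum Ax G f ND) as [D [PD [Sub NDf]]].
  apply NDf. apply (truth Ax f (mkseg Ax D PD)).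
  apply HS; [exact HC| apply CV_val|].
  intros g Hg. apply (truth Ax g (mkseg Ax D PD)). apply Sub, Hg.
Qed.
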